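(* Let $\theta>1$, $r\in(\theta^{-1},\theta^{-1/2}]$ and \[ \beta^*:=\frac{1-r^2\theta}{r\theta}\max\Big(\frac{1}{1-r},\frac{1}{r\theta-1}\Big). \] Let $\mathsf{A}$ be any deterministic online algorithm for one-max search with predictions having robustness $r$ and consistency $\frac1{r\theta}$, and suppose there is $\beta\ge0$ such that for all $n\ge1$, all $p\in[1,\theta]^n$ with maximum $p^*$ and all $y\in[1,\theta]$, \[ \frac{\mathsf{A}(p,y)}{p^*}\ge\max\Big(r,\ \frac1{r\theta}-\beta\,\frac{|p^*-y|}{p^*}\Big). \] Then $\beta\ge\beta^*$. Moreover, the algorithm $\mathsf{A}^1_r$ satisfies this inequality (for all $n,p,y$) with $\beta=\beta^*$.
   Context: One-max search: fix $\theta>1$. An instance is a sequence of prices $p=(p_1,\dots,p_n)\in[1,\theta]^n$, revealed one at a time; the algorithm receives at the start a prediction $y\in[1,\theta]$ of $p^*:=\max_ip_i$. At each step it irrevocably accepts the current price (payoff = that price) or rejects it; if nothing is accepted by step $n$ the payoff is $1$. Consistency: $\inf_p \mathsf{A}(p,p^* )/p^*$; robustness: $\inf_{p,y}\mathsf{A}(p,y)/p^*$. For $\Phi:[1,\theta]\to[1,\theta]$, the threshold algorithm $\mathsf{A}_\Phi$ accepts the first $p_i$ with $p_i\ge\Phi(y)$. Let $\varphi_r(z)=\frac{r\theta-1}{1-r}+\frac{1-r^2\theta}{1-r}\cdot\frac{z}{r\theta}$ and $\Phi^1_r(z)=\max(r\theta,\varphi_r(z))$; $\mathsf{A}^1_r:=\mathsf{A}_{\Phi^1_r}$.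 *)

(* Defs.v *)
From Stdlib Require Import Reals Lra List.
Import ListNotations.
Open Scope R_scope.

(* A deterministic online algorithm for one-max search with predictions:
   given the prediction y and the prefix (p_1,...,p_i) of prices revealed
   so far (the last element being the current price p_i), it decides
   whether to accept the current price (true) or reject it (false). *)
Definition algo := R -> list R -> bool.

Fixpoint run (A : algo) (y : R) (hist rest : list R) : R :=
  match rest with
  | [] => 1
  | x :: t => if A y (hist ++ [x]) then x else run A y (hist ++ [x]) t
  end.

Definition payoff (A : algo) (y : R) (p : list R) : R := run A y [] p.

(* pstar = max_i p_i  (for prices in [1,theta], folding from 1 is exact) *)
Definition pmax (p : list R) : R := fold_right Rmax 1 p.

Definition instance (theta : R) (n : nat) (p : list R) : Prop :=
  (1 <= n)%nat /\ length p = n /\ Forall (fun x => 1 <= x <= theta) p.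

Definition robust (theta r : R) (A : algo) : Prop :=
  forall n p y, instance theta n p -> 1 <= y <= theta ->
    payoff A y p / pmax p >= r.

Definition consistent (theta c : R) (A : algo) : Prop :=
  forall n p, instance theta n p -> payoff A (pmax p) p / pmax p >= c.

Definition threshold_alg (Phi : R -> R) : algo :=
  fun y hist => if Rle_dec (Phi y) (last hist 0) then true else false.

Definition phi_r (theta r z : R) : R :=
  (r * theta - 1) / (1 - r) + (1 - r ^ 2 * theta) / (1 - r) * (z / (r * theta)).

Definition Phi1 (theta r z : R) : R := Rmax (r * theta) (phi_r theta r z).

Definition A1r (theta r : R) : algo := threshold_alg (Phi1 theta r).

Definition beta_star (theta r : R) : R :=
  (1 - r ^ 2 * theta) / (r * theta) * Rmax (1 / (1 - r)) (1 / (r * theta - 1)).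

Definition smooth_guarantee (theta r beta : R) (A : algo) : Prop :=
  forall n p y, instance theta n p -> 1 <= y <= theta ->
    payoff A y p / pmax p >=
      Rmax r (1 / (r * theta) - beta * (Rabs (pmax p - y) / pmax p)).

(* Main.v *)
Require Import Defs.
From Stdlib Require Import Reals.
From Stdlib Require Import Lra List.
Import ListNotations.
Open Scope R_scope.

Lemma lim_right (a b c k : R) : a < b ->
  (forall x, a < x <= b -> 0 <= c + k*x) -> 0 <= c + k*a.
Proof.
  intros Hab H. destruct (Rle_or_lt 0 (c + k*a)) as [h|h]; [exact h|exfalso].
  set (e := - (c + k*a)).
  assert (He : 0 < e) by (unfold e; lra).
  assert (Hk : 0 < Rabs k + 1) by (pose proof (Rabs_pos k); lra).
  set (t := Rmin (b - a) (e / (2 * (Rabs k + 1)))).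
  assert (Ht0 : 0 < t).
  { unfold t. apply Rmin_pos; [lra|]. apply Rdiv_lt_0_compat; lra. }
  assert (Ht1 : t <= b - a) by apply Rmin_l.
  assert (Ht2 : t <= e / (2 * (Rabs k + 1))) by apply Rmin_r.
  assert (Ht3 : t * (2 * (Rabs k + 1)) <= e).
  { apply (Rmult_le_compat_r (2 * (Rabs k + 1))) in Ht2; [|lra].
    replace (e / (2 * (Rabs k + 1)) * (2 * (Rabs k + 1))) with e in Ht2 by (field; lra).
    exact Ht2. }
  specialize (H (a + t) ltac:(lra)).
  assert (k * t <= Rabs k * t).
  { apply Rmult_le_compat_r; [lra|apply Rle_abs]. }
  assert (0 <= Rabs k * t) by (apply Rmult_le_pos; [apply Rabs_pos|lra]).
  assert (c + k * (a + t) = - e + k * t) by (unfold e; ring).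
  nra.
Qed.

Lemma lim_left (a b c k : R) : a < b ->
  (forall x, a <= x < b -> 0 <= c + k*x) -> 0 <= c + k*b.
Proof.
  intros Hab H.
  assert (H' := lim_right (-b) (-a) c (-k) ltac:(lra)).
  replace (c + k*b) with (c + (-k)*(-b)) by ring.
  apply H'. intros x Hx. replace (c + - k * x) with (c + k * (-x)) by ring.
  apply H. lra.
Qed.

Lemma run_thr (Phi : R -> R) (y : R) (rest hist : list R) :
  (run (threshold_alg Phi) y hist rest = 1 /\ Forall (fun x => x < Phi y) rest)
  \/ (Phi y <= run (threshold_alg Phi) y hist rest /\ In (run (threshold_alg Phi) y hist rest) rest).
Proof.
  revert hist; induction rest as [|x t IH]; intros hist; simpl.
  - left; split; [reflexivity|constructor].
  - change (threshold_alg Phi y (hist ++ [x])) with (if Rle_dec (Phi y) (last (hist++[x]) 0) then true else false).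
    rewrite last_last.
    destruct (Rle_dec (Phi y) x) as [h|h].
    + right; split; [exact h|left; reflexivity].
    + destruct (IH (hist ++ [x])) as [[H1 H2]|[H1 H2]].
      * left; split; [exact H1|constructor; [lra|exact H2]].
      * right; split; [exact H1|right; exact H2].
Qed.

Lemma pmax_ge (p : list R) x : In x p -> x <= pmax p.
Proof.
  induction p as [|a t IH]; simpl; [tauto|].
  intros [->|h]; [apply Rmax_l|]. eapply Rle_trans; [apply IH, h|apply Rmax_r].
Qed.

Lemma pmax_lt (p : list R) T : 1 < T -> Forall (fun x => x < T) p -> pmax p < T.
Proof.
  intros h1 h; induction h; simpl; [lra|]. apply Rmax_lub_lt; assumption.
Qed.

Lemma pmax_bounds (p : list R) th : 1 <= th -> Forall (fun x => 1 <= x <= th) p -> 1 <= pmax p <= th.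
Proof.
  intros h1 h; induction h; simpl; [lra|].
  split. eapply Rle_trans; [|apply Rmax_r]; lra. apply Rmax_lub; lra.
Qed.

Lemma le_div_r a v P : 0 < P -> a * P <= v -> a <= v / P.
Proof. intros hP h. replace a with ((a*P)/P) by (field; lra).
  unfold Rdiv. apply Rmult_le_compat_r; [left; apply Rinv_0_lt_compat; lra|exact h]. Qed.

Lemma div_le a v P : 0 < P -> a <= v -> a / P <= v / P.
Proof. intros hP h. unfold Rdiv. apply Rmult_le_compat_r; [left; apply Rinv_0_lt_compat; lra|exact h]. Qed.

Lemma part2_real th r P y v :
  1 < th -> 1 < r * th -> r < 1 -> r ^ 2 * th <= 1 ->
  1 <= P <= th -> 1 <= y <= th ->
  ((v = 1 /\ P < Phi1 th r y) \/ (Phi1 th r y <= v <= P)) ->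
  v / P >= Rmax r (1 / (r * th) - beta_star th r * (Rabs (P - y) / P)).
Proof.
  intros Hth Hu Hr1 Hr2 HP Hy Hcase.
  assert (Hr0 : 0 < r) by nra.
  set (u := r * th) in *.
  set (K := (u - 1) / (1 - r)).
  set (s := 1 - K / u).
  set (B := beta_star th r).
  set (m := (1 - r ^ 2 * th) / u).
  assert (HK : 0 < K) by (unfold K; apply Rdiv_lt_0_compat; lra).
  assert (Hm : 0 <= m) by (unfold m; apply Rmult_le_pos; [lra|left; apply Rinv_0_lt_compat; lra]).
  assert (Hs : s = m * (1 / (1 - r))) by (unfold s, m, K, u; field; lra).
  assert (Hs0 : 0 <= s) by (rewrite Hs; apply Rmult_le_pos; [lra|left; apply Rdiv_lt_0_compat; lra]).
  assert (HB : B = m * Rmax (1 / (1 - r)) (1 / (u - 1))) by (unfold B, beta_star, m, u; reflexivity).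
  assert (HsB : s <= B).
  { rewrite Hs, HB. apply Rmult_le_compat_l; [lra|apply Rmax_l]. }
  assert (HBK : s <= B * K).
  { assert (h : m * (1 / (u - 1)) <= B) by (rewrite HB; apply Rmult_le_compat_l; [lra|apply Rmax_r]).
    assert (h2 : s = m * (1 / (u - 1)) * K) by (rewrite Hs; unfold K; field; lra).
    rewrite h2. apply Rmult_le_compat_r; lra. }
  assert (Hphi : forall z, phi_r th r z = s * z + K).
  { intro z. unfold phi_r, s, K, u. field. lra. }
  assert (Hphith : s * th + K = 1 / r) by (unfold s, K, u; field; lra).
  assert (HphiP : s * P + K - P / u = K * (1 - P / th)) by (unfold s, K, u; field; lra).
  assert (HPth : P / th <= 1) by (replace 1 with (th/th) by (field; lra); apply div_le; lra).
  assert (Hru : r * u <= 1) by (unfold u; nra).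
  assert (HT : Phi1 th r y = Rmax u (s * y + K)) by (unfold Phi1; rewrite Hphi; reflexivity).
  assert (HTu : u <= Phi1 th r y) by (rewrite HT; apply Rmax_l).
  assert (HTphi : s * y + K <= Phi1 th r y) by (rewrite HT; apply Rmax_r).
  assert (HP0 : 0 < P) by lra.
  assert (HBa : 0 <= B * Rabs (P - y)).
  { apply Rmult_le_pos; [lra|apply Rabs_pos]. }
  assert (Hsm : 1 / u - B * (Rabs (P - y) / P) = (P / u - B * Rabs (P - y)) / P) by (field; lra).
  assert (HPu1 : P <= u -> P / u <= 1).
  { intro h. replace 1 with (u/u) by (field; lra). apply div_le; lra. }
  apply Rle_ge. apply Rmax_lub; [apply le_div_r; [exact HP0|]|rewrite Hsm; apply div_le; [exact HP0|]].
  - destruct Hcase as [[-> H]|[H1 H2]].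
    + assert (HT1 : Phi1 th r y <= 1 / r).
      { rewrite HT. apply Rmax_lub.
        - apply le_div_r; lra.
        - assert (0 <= s * (th - y)) by (apply Rmult_le_pos; lra). nra. }
      assert (r * P < r * (1 / r)) by (apply Rmult_lt_compat_l; lra).
      replace (r * (1/r)) with 1 in * by (field; lra). lra.
    + assert (r * P <= r * th) by (apply Rmult_le_compat_l; lra). unfold u in *. lra.
  - destruct (Rle_or_lt P u) as [hPu|hPu].
    { specialize (HPu1 hPu). destruct Hcase as [[-> H]|[H1 H2]]; lra. }
    destruct Hcase as [[-> H]|[H1 H2]].
    +
      assert (HT2 : Phi1 th r y = s * y + K).
      { rewrite HT. unfold Rmax. destruct (Rle_dec u (s * y + K)); [reflexivity|].
        rewrite HT in H. unfold Rmax in H. destruct (Rle_dec u (s * y + K)); lra. }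
      rewrite HT2 in H.
      assert (Hyu : y / u = (y - P) / u + P / u) by (field; lra).
      assert (Hs' : s * (y - P) > K * (P / u - 1)).
      { assert (s * y + K - P = s * (y - P) - K * (P / u - 1)) by (unfold s; field; lra). lra. }
      assert (HPu : P / u - 1 > 0).
      { assert (1 < P / u) by (apply (Rmult_lt_reg_r u); [lra|]; replace (P / u * u) with P by (field; lra); lra). lra. }
      assert (HKd : K * (P / u - 1) > 0) by (apply Rmult_lt_0_compat; lra).
      assert (Hw : y - P > 0).
      { destruct (Rle_or_lt (y - P) 0); [|lra]. assert (s * (y - P) <= 0) by nra. lra. }
      assert (Hab : Rabs (P - y) = y - P) by (rewrite Rabs_minus_sym; apply Rabs_right; lra).
      rewrite Hab.
      assert (s * (y - P) <= B * K * (y - P)) by (apply Rmult_le_compat_r; lra).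
      assert (K * (B * (y - P)) > K * (P / u - 1)) by nra.
      assert (B * (y - P) > P / u - 1) by (apply (Rmult_lt_reg_l K); lra).
      lra.
    +
      assert (HK2 : 0 <= K * (1 - P / th)) by (apply Rmult_le_pos; lra).
      destruct (Rle_or_lt P y) as [hy|hy].
      * assert (0 <= s * (y - P)) by (apply Rmult_le_pos; lra). nra.
      * assert (Hab : Rabs (P - y) = P - y) by (apply Rabs_right; lra).
        rewrite Hab.
        assert (s * (P - y) <= B * (P - y)) by (apply Rmult_le_compat_r; lra).
        nra.
Qed.

Lemma params th r : 1 < th -> / th < r <= / sqrt th ->
  0 < r /\ r < 1 /\ 1 < r * th /\ r ^ 2 * th <= 1.
Proof.
  intros Hth [H1 H2].
  assert (Hi : 0 < / th) by (apply Rinv_0_lt_compat; lra).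
  assert (Hu : 1 < r * th).
  { apply (Rmult_lt_compat_r th) in H1; [|lra]. rewrite Rinv_l in H1; lra. }
  assert (Hs : 0 < sqrt th) by (apply sqrt_lt_R0; lra).
  assert (Hss : sqrt th * sqrt th = th) by (apply sqrt_sqrt; lra).
  assert (Hrs : r * sqrt th <= 1).
  { apply (Rmult_le_compat_r (sqrt th)) in H2; [|lra]. rewrite Rinv_l in H2; lra. }
  assert (Hr0 : 0 < r) by lra.
  assert (Hr2 : r ^ 2 * th <= 1).
  { assert (E : r ^ 2 * th = (r * sqrt th) * (r * sqrt th)) by (rewrite <- Hss at 1; ring).
    rewrite E.
    assert (0 <= r * sqrt th) by nra. nra. }
  repeat split; try lra. nra.
Qed.

Lemma ge_mul_r a b c : 0 < c -> a >= b -> a * c >= b * c.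
Proof. intros; apply Rle_ge, Rmult_le_compat_r; lra. Qed.

Theorem theorem4 (theta r : R) :
  (1 < theta -> / theta < r <= / sqrt theta ->
  (forall (A : algo) (beta : R),
      robust theta r A -> consistent theta (1 / (r * theta)) A ->
      0 <= beta -> smooth_guarantee theta r beta A ->
      beta >= beta_star theta r)
  /\ smooth_guarantee theta r (beta_star theta r) (A1r theta r))%R.
Proof.
  intros Hth Hr.
  destruct (params theta r Hth Hr) as [Hr0 [Hr1 [Hu Hr2]]].
  split.
  - intros A beta Hrob Hcons Hb Hsm.
    assert (HBd : forall x, r * theta < x <= theta -> 0 <= (beta * theta - 1 / r) + (1 - beta) * x).
    { intros x Hx.
      assert (Hi1 : instance theta 1 [x]).
      { unfold instance; split; [auto|split; [reflexivity|]]; repeat (apply Forall_cons; [lra|]); apply Forall_nil. }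
      pose proof (Hcons 1%nat [x] Hi1) as Hc.
      unfold payoff, pmax in Hc; simpl in Hc.
      rewrite (Rmax_left x 1) in Hc by lra.
      destruct (A x [x]) eqn:E.
      - assert (Hi2 : instance theta 2 [x; theta]).
        { unfold instance; split; [auto|split; [reflexivity|]]; repeat (apply Forall_cons; [lra|]); apply Forall_nil. }
        pose proof (Hsm 2%nat [x; theta] x Hi2 ltac:(lra)) as Hs.
        unfold payoff, pmax in Hs; simpl in Hs. rewrite E in Hs.
        rewrite (Rmax_left theta 1) in Hs by lra.
        rewrite (Rmax_right x theta) in Hs by lra.
        rewrite (Rabs_right (theta - x)) in Hs by lra.
        assert (Hs2 : x / theta >= 1 / (r * theta) - beta * ((theta - x) / theta)).
        { eapply Rge_trans; [exact Hs|apply Rle_ge, Rmax_r]. }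
        apply (ge_mul_r _ _ theta) in Hs2; [|lra].
        replace (x / theta * theta) with x in Hs2 by (field; lra).
        replace ((1 / (r * theta) - beta * ((theta - x) / theta)) * theta) with
          (1 / r - beta * (theta - x)) in Hs2 by (field; lra).
        lra.
      - exfalso.
        apply (ge_mul_r _ _ (x * (r * theta))) in Hc; [|nra].
        replace (1 / x * (x * (r * theta))) with (r * theta) in Hc by (field; lra).
        replace (1 / (r * theta) * (x * (r * theta))) with x in Hc by (field; lra).
        lra. }
    assert (HAd : forall q, 1 <= q < 1 / r ->
               0 <= (1 + beta * theta) + (- (1 / (r * theta)) - beta) * q).
    { intros q Hq.
      assert (H1r : 1 / r < theta).
      { apply (Rmult_lt_reg_l r); [lra|]. replace (r * (1 / r)) with 1 by (field; lra). lra. }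
      assert (Hi2 : instance theta 2 [q; theta]).
      { unfold instance; split; [auto|split; [reflexivity|]]; repeat (apply Forall_cons; [lra|]); apply Forall_nil. }
      pose proof (Hcons 2%nat [q; theta] Hi2) as Hc.
      unfold payoff, pmax in Hc; simpl in Hc.
      rewrite (Rmax_left theta 1) in Hc by lra.
      rewrite (Rmax_right q theta) in Hc by lra.
      destruct (A theta [q]) eqn:E.
      - exfalso.
        apply (ge_mul_r _ _ theta) in Hc; [|lra].
        replace (q / theta * theta) with q in Hc by (field; lra).
        replace (1 / (r * theta) * theta) with (1 / r) in Hc by (field; lra).
        lra.
      - assert (Hi1 : instance theta 1 [q]).
        { unfold instance; split; [auto|split; [reflexivity|]]; repeat (apply Forall_cons; [lra|]); apply Forall_nil. }
        pose proof (Hsm 1%nat [q] theta Hi1 ltac:(lra)) as Hs.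
        unfold payoff, pmax in Hs; simpl in Hs. rewrite E in Hs.
        rewrite (Rmax_left q 1) in Hs by lra.
        rewrite (Rabs_left1 (q - theta)) in Hs by lra.
        assert (Hs2 : 1 / q >= 1 / (r * theta) - beta * (- (q - theta) / q)).
        { eapply Rge_trans; [exact Hs|apply Rle_ge, Rmax_r]. }
        apply (ge_mul_r _ _ q) in Hs2; [|lra].
        replace (1 / q * q) with 1 in Hs2 by (field; lra).
        replace ((1 / (r * theta) - beta * (- (q - theta) / q)) * q) with
          (q / (r * theta) - beta * (theta - q)) in Hs2 by (field; lra).
        replace ((- (1 / (r * theta)) - beta) * q) with (- (q / (r * theta)) - beta * q) by (field; lra).
        lra. }
    assert (H1r : 1 < 1 / r).
    { apply (Rmult_lt_reg_l r); [lra|]. replace (r * (1 / r)) with 1 by (field; lra). lra. }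
    assert (H1r' : 1 / r < theta).
    { apply (Rmult_lt_reg_l r); [lra|]. replace (r * (1 / r)) with 1 by (field; lra). lra. }
    pose proof (lim_right (r * theta) theta _ _ ltac:(nra) HBd) as LB.
    pose proof (lim_left 1 (1 / r) _ _ H1r HAd) as LA.
    apply Rle_ge. unfold beta_star, Rmax.
    destruct (Rle_dec (1 / (1 - r)) (1 / (r * theta - 1))).
    +
      replace ((1 - r ^ 2 * theta) / (r * theta) * (1 / (r * theta - 1))) with
        ((1 / (r * (r * theta)) - 1) / (theta - 1 / r)) by (field; repeat split; nra).
      apply (Rmult_le_reg_r (theta - 1 / r)); [lra|].
      replace ((1 / (r * (r * theta)) - 1) / (theta - 1 / r) * (theta - 1 / r)) with
        (1 / (r * (r * theta)) - 1) by (field; repeat split; nra).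
      replace ((- (1 / (r * theta)) - beta) * (1 / r)) with (- (1 / (r * (r * theta))) - beta * (1 / r)) in LA
        by (field; lra).
      lra.
    + replace ((1 - r ^ 2 * theta) / (r * theta) * (1 / (1 - r))) with
        ((1 / r - r * theta) / (theta - r * theta)) by (field; repeat split; nra).
      apply (Rmult_le_reg_r (theta - r * theta)); [nra|].
      replace ((1 / r - r * theta) / (theta - r * theta) * (theta - r * theta)) with
        (1 / r - r * theta) by (field; repeat split; nra).
      nra.
  - intros n p y [Hn [Hlen Hall]] Hy.
    assert (Hp : 1 <= pmax p <= theta) by (apply pmax_bounds; [lra|exact Hall]).
    assert (HT : r * theta <= Phi1 theta r y) by (unfold Phi1; apply Rmax_l).
    unfold payoff, A1r.
    destruct (run_thr (Phi1 theta r) y p []) as [[H1 H2]|[H1 H2]].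
    + apply part2_real; try lra. left. split; [exact H1|]. apply pmax_lt; [lra|exact H2].
    + apply part2_real; try lra. right. split; [exact H1|]. apply pmax_ge; exact H2.
Qed.
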